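(* Consider BPSK transmission of a binary linear code $\mathcal{C}$ of length $n$ over an AWGN channel, ML decoding with error event $E$, the all-zero codeword transmitted, and a family of regions $\{\mathcal{R}(r), r\in\mathcal{I}\}$ satisfying assumptions A1–A2 of the context with pdf $g$ of $R$. Let $f_u$ be the conditional union bound $$ f_u(r)=\sum_{1\le d\le n} A_d\,p_2(r,d), $$ where $\{A_d\}$ is the weight distribution of $\mathcal{C}$ and $p_2(r,d)$ is the conditional pairwise error probability defined in the context. Suppose that, conditional on $\underline y\in\partial\mathcal{R}(r)$, $\underline y$ is uniformly distributed over $\partial\mathcal{R}(r)$. If $f_u(r)$ is a non-decreasing and continuous function of $r$, then the optimal parameter $r_1$ minimizing over $r^*$ the bound $\int_{-\infty}^{r^*} f_u(r)g(r)\,{\rm d}r+\int_{r^*}^{+\infty} g(r)\,{\rm d}r$ does not depend on the SNR but only on the weight spectrum of the code.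
   Context: System model: codeword bits $c_t$ are mapped to $s_t=1-2c_t$; $\underline y=\underline s+\underline z$ with $\underline z$ i.i.d. $\mathcal{N}(0,\sigma^2)$ (SNR determined by $\sigma$); ML decoding chooses the nearest signal vector; the all-zero codeword's image $\underline s^{(0)}$ is transmitted. (A1) $\mathcal{R}(r_1)\subset\mathcal{R}(r_2)$ for $r_1<r_2$; boundaries $\partial\mathcal{R}(r)$ pairwise disjoint with union over $r\in\mathcal{I}$ equal to $\mathbb{R}^n$. (A2) $R:\underline y\mapsto r$ for $\underline y\in\partial\mathcal{R}(r)$ has pdf $g(r)$ ($g\equiv0$ outside $\mathcal{I}$). For $\underline s^{(1)}$ the image of a weight-$d$ codeword, $p_2(r,d)={\rm Pr}\{\|\underline y-\underline s^{(1)}\|\le\|\underline y-\underline s^{(0)}\|\mid\underline y\in\partial\mathcal{R}(r)\}$ (this depends only on $d$ by symmetry). $f_u$ is assumed non-trivial: $f_u(r)\le1$ for some $r$. *)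

(* Defs.v *)
From HB Require Import structures.
From mathcomp Require Import all_boot all_order all_algebra.
From mathcomp Require Import all_classical all_reals all_analysis.
Set Implicit Arguments. Unset Strict Implicit. Unset Printing Implicit Defensive.
Import Order.TTheory GRing.Theory Num.Theory.
Import numFieldTopology.Exports numFieldNormedType.Exports.
Local Open Scope classical_set_scope.
Local Open Scope ring_scope.

Section Defs.
Variables (R : realType) (n : nat).

Definition bnd (A : set 'rV[R]_n) : set 'rV[R]_n := closure A `\` interior A.

Definition wt (c : 'rV['F_2]_n) : nat := #|[set i : 'I_n | c 0 i != 0]|.

Definition is_linear_code (C : {set 'rV['F_2]_n}) : bool :=
  (0 \in C) && [forall x in C, forall y in C, (x + y) \in C].

Definition weight_spectrum (C : {set 'rV['F_2]_n}) (d : nat) : nat :=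
  #|[set c in C | wt c == d]|.

Definition bpsk (c : 'rV['F_2]_n) : 'rV[R]_n :=
  \row_i (if c 0 i == 0 then 1 else -1).

Definition eucl (x : 'rV[R]_n) : R := Num.sqrt (\sum_i x 0 i ^+ 2).

Definition pairwise_err_set (c : 'rV['F_2]_n) : set 'rV[R]_n :=
  [set y | eucl (y - bpsk c) <= eucl (y - bpsk 0)].

Definition cond_union_bound (A : nat -> nat) (p2 : R -> nat -> R) (r : R) : R :=
  \sum_(1 <= d < n.+1) (A d)%:R * p2 r d.

Definition region_family (I : set R) (Reg : R -> set 'rV[R]_n) : Prop :=
  [/\ (forall r1 r2, I r1 -> I r2 -> r1 < r2 -> Reg r1 `<=` Reg r2),
      (forall r1 r2, I r1 -> I r2 -> r1 != r2 -> bnd (Reg r1) `&` bnd (Reg r2) = set0)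
    & \bigcup_(r in I) bnd (Reg r) = setT].

Definition split_bound (f g : R -> R) (rs : \bar R) : \bar R :=
  (\int[lebesgue_measure]_(r in [set r : R | (r%:E < rs)%E]) (f r * g r)%:E
   + \int[lebesgue_measure]_(r in [set r : R | (rs <= r%:E)%E]) (g r)%:E)%E.

End Defs.

Definition mutually_independent (R : realType) (d : measure_display)
  (T : measurableType d) (P : probability T R) (m : nat)
  (X : 'I_m -> {RV P >-> R}) : Prop :=
  forall B : 'I_m -> set R, (forall i, measurable (B i)) ->
    P (\bigcap_(i in [set: 'I_m]) (X i @^-1` B i)) =
    (\prod_(i < m) P (X i @^-1` B i))%E.

(* Main.v *)
Require Import Defs.
From HB Require Import structures.
From mathcomp Require Import all_boot all_order all_algebra.
From mathcomp Require Import all_classical all_reals all_analysis.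
From mathcomp Require Import lra.
Import Order.TTheory GRing.Theory Num.Theory.
Import numFieldTopology.Exports numFieldNormedType.Exports.
Local Open Scope classical_set_scope.
Local Open Scope ring_scope.
Import HBNNSimple.
Local Open Scope ereal_scope.

Lemma sup_add_le (R : realType) (SA SB : set (\bar R)) (c : \bar R) :
  (forall x y, SA x -> SB y -> x + y <= c) -> SA 0 -> SB 0 ->
  (forall x, SA x -> 0 <= x) -> (forall y, SB y -> 0 <= y) ->
  ereal_sup SA + ereal_sup SB <= c.
Proof.
move=> H A0 B0 Ap Bp.
have c0 : 0 <= c by have := H _ _ A0 B0; rewrite adde0.
case: c H c0 => [r| |] H c0; last 2 first.
- by rewrite leey.
- by [].
have supA : ereal_sup SA <= r%:E.
  by apply: ge_ereal_sup => x Ax; have := H _ _ Ax B0; rewrite adde0.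
have supB : ereal_sup SB <= r%:E.
  by apply: ge_ereal_sup => x Bx; have := H _ _ A0 Bx; rewrite add0e.
have sA0 : 0 <= ereal_sup SA by apply: ereal_sup_ubound.
have sB0 : 0 <= ereal_sup SB by apply: ereal_sup_ubound.
move: supA supB sA0 sB0.
case Ea: (ereal_sup SA) => [a| |] //; case Eb: (ereal_sup SB) => [b| |] //.
rewrite !lee_fin => ar br a0 b0.
rewrite leNgt; apply/negP => rab.
pose e := ((a + b - r) / 4)%R.
have e0 : (0 < e)%R by rewrite /e; lra.
have [x Ax xa] : exists2 x, SA x & ((a - e)%:E < x).
  by apply: ereal_sup_gt; rewrite Ea lte_fin; lra.
have [y By yb] : exists2 y, SB y & ((b - e)%:E < y).
  by apply: ereal_sup_gt; rewrite Eb lte_fin; lra.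
have := H _ _ Ax By.
have := lteD xa yb.
rewrite -EFinD => h1 h2.
have := lt_le_trans h1 h2; rewrite lte_fin /e; lra.
Qed.

Section inner.
Context d (T : measurableType d) (R : realType) (mu : {measure set T -> \bar R}).

Lemma inner_le D (f h : T -> \bar R) : (forall x, 0 <= f x) -> (forall x, D x -> f x <= h x) ->
  \int[mu]_(x in D) f x <= \int[mu]_(x in D) h x.
Proof.
move=> f0 fh.
rewrite !ge0_integralE //; last by move=> x Dx; exact: le_trans (f0 x) (fh x Dx).
apply: ge_ereal_sup => _ [s /= Hs <-]; apply: ereal_sup_ubound; exists s => //= x.
apply: le_trans (Hs x) _; rewrite /patch; case: ifP => // /set_mem; exact: fh.
Qed.

Lemma inner_add (A B : set T) (f : T -> \bar R) : measurable A -> measurable B ->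
  A `&` B = set0 -> (forall x, 0 <= f x) ->
  \int[mu]_(x in A `|` B) f x = \int[mu]_(x in A) f x + \int[mu]_(x in B) f x.
Proof.
move=> mA mB AB f0.
rewrite !ge0_integralE //.
apply/eqP; rewrite eq_le; apply/andP; split.
- apply: ge_ereal_sup => _ [s /= Hs <-].
  have s0 x : ~ (A `|` B) x -> s x = 0%R.
    move=> nx; apply/eqP; rewrite eq_le fun_ge0 andbT -lee_fin.
    by have := Hs x; rewrite /patch; case: ifPn => //; rewrite inE.
  rewrite (eq_sintegral (add_nnsfun (proj_nnsfun s mA) (proj_nnsfun s mB))); last first.
    move=> x /=; rewrite !measurable_realfun.mindicE.
    have [xA|xA] := pselect (A x); have [xB|xB] := pselect (B x).
    + by have : (A `&` B) x by []; rewrite AB.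
    + by rewrite (mem_set xA) memNset //= mulr1 mulr0 addr0.
    + by rewrite (mem_set xB) memNset //= mulr1 mulr0 add0r.
    + by rewrite !memNset //= !mulr0 addr0 s0 //; case.
  rewrite sintegralD; apply: leeD; apply: ereal_sup_ubound.
  + exists (proj_nnsfun s mA) => //= x; rewrite measurable_realfun.mindicE /patch.
    case: ifPn => xA; rewrite ?mulr1 ?mulr0 //.
    by apply: le_trans (Hs x) _; rewrite /patch ifT // inE; left; move: xA; rewrite inE.
  + exists (proj_nnsfun s mB) => //= x; rewrite measurable_realfun.mindicE /patch.
    case: ifPn => xB; rewrite ?mulr1 ?mulr0 //.
    by apply: le_trans (Hs x) _; rewrite /patch ifT // inE; right; move: xB; rewrite inE.
- apply: sup_add_le.
  + move=> _ _ [s1 /= H1 <-] [s2 /= H2 <-].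
    rewrite -sintegralD; apply: ereal_sup_ubound; exists (add_nnsfun s1 s2) => //= x.
    have := H1 x; have := H2 x; rewrite /patch.
    case: ifPn => xB; case: ifPn => xA.
    * exfalso; have : (A `&` B) x by split; exact: set_mem.
      by rewrite AB.
    * move=> h2 h1.
      have e1 : s1 x = 0%R by apply/eqP; rewrite eq_le fun_ge0 andbT -lee_fin.
      by rewrite e1 add0r ifT // inE; right; rewrite -inE.
    * move=> h2 h1.
      have e2 : s2 x = 0%R by apply/eqP; rewrite eq_le fun_ge0 andbT -lee_fin.
      by rewrite e2 addr0 ifT // inE; left; rewrite -inE.
    * move=> h2 h1.
      have e1 : s1 x = 0%R by apply/eqP; rewrite eq_le fun_ge0 andbT -lee_fin.
      have e2 : s2 x = 0%R by apply/eqP; rewrite eq_le fun_ge0 andbT -lee_fin.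
      by rewrite e1 e2 addr0; case: ifP.
  + by exists nnsfun0 => //=; [move=> x; rewrite /patch; case: ifP | exact: sintegral0].
  + by exists nnsfun0 => //=; [move=> x; rewrite /patch; case: ifP | exact: sintegral0].
  + by move=> _ [s _ <-]; exact: sintegral_ge0.
  + by move=> _ [s _ <-]; exact: sintegral_ge0.
Qed.
End inner.

Section decomp.
Variable R : realType.
Definition Lset (c : \bar R) := [set r : R | r%:E < c].
Definition Gset (c : \bar R) := [set r : R | c <= r%:E].

Lemma Lset_meas c : measurable (Lset c).
Proof.
case: c => [t| |].
- have -> : Lset t%:E = `]-oo, t[%classic.
    by apply/seteqP; split => x /=; rewrite /Lset in_itv /= lte_fin.
  exact: measurable_itv.
- have -> : Lset +oo = setT by apply/seteqP; split => x // _; rewrite /Lset /=; exact: ltey.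
  exact: measurableT.
- have -> : Lset -oo = set0 by apply/seteqP; split => x //; rewrite /Lset /= ltNge leNye.
  exact: measurable0.
Qed.

Lemma Gset_meas c : measurable (Gset c).
Proof.
case: c => [t| |].
- have -> : Gset t%:E = `[t, +oo[%classic.
    by apply/seteqP; split => x /=; rewrite /Gset in_itv /= lee_fin andbT.
  exact: measurable_itv.
- have -> : Gset +oo = set0 by apply/seteqP; split => x //; rewrite /Gset /= leNgt ltey.
  exact: measurable0.
- have -> : Gset -oo = setT by apply/seteqP; split => x // _; rewrite /Gset /=; exact: leNye.
  exact: measurableT.
Qed.

Lemma SB_decomp (f g : R -> R) (a b : \bar R) :
  (forall r, (0 <= f r * g r)%R) -> (forall r, (0 <= g r)%R) -> a <= b ->
  split_bound f g b = \int[lebesgue_measure]_(r in Lset a) (f r * g r)%:E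
     + \int[lebesgue_measure]_(r in Gset a `&` Lset b) (f r * g r)%:E
     + \int[lebesgue_measure]_(r in Gset b) (g r)%:E /\
  split_bound f g a = \int[lebesgue_measure]_(r in Lset a) (f r * g r)%:E
     + \int[lebesgue_measure]_(r in Gset a `&` Lset b) (g r)%:E
     + \int[lebesgue_measure]_(r in Gset b) (g r)%:E.
Proof.
move=> fg0 g0 ab.
have eL : Lset b = Lset a `|` (Gset a `&` Lset b).
  apply/seteqP; split => x /=.
  - by move=> xb; case: (leP a x%:E) => xa; [right|left].
  - by case=> [xa|[_ xb]] //; exact: lt_le_trans xa ab.
have eG : Gset a = (Gset a `&` Lset b) `|` Gset b.
  apply/seteqP; split => x /=.
  - by move=> xa; case: (ltP x%:E b) => xb; [left|right].
  - by case=> [[xa _]|xb] //; exact: le_trans ab xb.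
have d1 : Lset a `&` (Gset a `&` Lset b) = set0.
  by apply/seteqP; split => x //; rewrite /Lset /Gset /= => -[xa [ax _]]; move: xa; rewrite ltNge ax.
have d2 : (Gset a `&` Lset b) `&` Gset b = set0.
  by apply/seteqP; split => x //; rewrite /Lset /Gset /= => -[[_ xb] bx]; move: xb; rewrite ltNge bx.
have mM : measurable (Gset a `&` Lset b) by apply: measurableI; [exact: Gset_meas|exact: Lset_meas].
split.
- rewrite /split_bound.
  have -> : [set r : R | r%:E < b] = Lset b by [].
  have -> : [set r : R | b <= r%:E] = Gset b by [].
  rewrite {1}eL inner_add //.
  exact: Lset_meas.
- rewrite /split_bound.
  have -> : [set r : R | r%:E < a] = Lset a by [].
  have -> : [set r : R | a <= r%:E] = Gset a by [].
  rewrite {1}eG inner_add ?addeA //.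
  exact: Gset_meas.
Qed.
End decomp.

Local Close Scope classical_set_scope.
Lemma wt_exists (n d : nat) : (d <= n)%N -> exists c : 'rV['F_2]_n, wt c = d.
Proof.
move=> dn; exists (\row_(i < n) (if (i < d)%N then 1 else 0))%R.
have winj : injective (widen_ord dn) by move=> i j h; apply/val_inj; exact: (congr1 val h).
rewrite /wt -[RHS](card_ord d) -(card_imset _ winj).
apply: eq_card => i; apply/idP/idP.
- move/set_mem; rewrite /= mxE; case: ifP => id; last by rewrite eqxx.
  by move=> _; apply/imsetP; exists (Ordinal id) => //; apply/val_inj.
- by case/imsetP => j _ ->; apply/mem_set; rewrite /= mxE (ltn_ord j) oner_eq0.
Qed.

Local Close Scope ereal_scope.
Local Open Scope classical_set_scope.
Theorem theorem3 (R : realType) (n : nat) (I : set R)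
  (Reg : R -> set 'rV[R]_n) (Rmap : 'rV[R]_n -> R)
  (U : R -> set 'rV[R]_n -> R) (p2 : R -> nat -> R) :
  region_family I Reg ->
  (forall y, I (Rmap y) /\ bnd (Reg (Rmap y)) y) ->
  (forall r A, 0 <= U r A <= 1) ->
  (forall r, I r -> U r (bnd (Reg r)) = 1) ->
  (forall r, I r -> forall c : 'rV['F_2]_n, p2 r (wt c) = U r (pairwise_err_set c)) ->
  exists Phi : (nat -> nat) -> \bar R,
  forall C : {set 'rV['F_2]_n}, is_linear_code C ->
  let fu := cond_union_bound n (weight_spectrum C) p2 in
  {homo fu : x y / x <= y} -> continuous fu -> (exists r, fu r <= 1) ->
  forall sigma : R, 0 < sigma ->
  forall (d : measure_display) (T : measurableType d) (P : probability T R)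
         (z : 'I_n -> {RV P >-> R}) (g : R -> R),
  (forall i (A : set R), measurable A ->
      distribution P (z i) A = normal_prob 0 sigma A) ->
  mutually_independent z ->
  let y := fun w : T => bpsk R 0 + \row_i z i w in
  measurable_fun setT (Rmap \o y) ->
  (forall r, 0 <= g r) ->
  (forall B : set R, measurable B ->
      P ((Rmap \o y) @^-1` B) = (\int[lebesgue_measure]_(r in B) (g r)%:E)%E) ->
  (forall r, ~ I r -> g r = 0) ->
  (forall (A : set 'rV[R]_n) (B : set R), measurable B -> measurable (y @^-1` A) ->
      P (y @^-1` A `&` (Rmap \o y) @^-1` B) =
      (\int[lebesgue_measure]_(r in B) (g r * U r A)%:E)%E) ->
  forall rs : \bar R,
    (split_bound fu g (Phi (weight_spectrum C)) <= split_bound fu g rs)%E.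

Proof.
move=> RF Rmap_ok U01 U1 p2U.
exists (fun A => ereal_sup (EFin @` [set x | cond_union_bound n A p2 x <= 1])).
move=> C _ fu fu_homo fu_cont [r0 hr0] sigma _ d T P z g _ _ y _ g0 _ gI _ rs /=.
set rstar := ereal_sup _.
have p2ge0 r dd : I r -> (1 <= dd <= n)%N -> 0 <= p2 r dd.
  move=> Ir /andP[_ ddn]; have [c <-] := @wt_exists _ _ ddn.
  by rewrite p2U //; case/andP: (U01 r (pairwise_err_set c)).
have Fg0 r : 0 <= fu r * g r.
  have [Ir|nIr] := pselect (I r); last by rewrite gI // mulr0.
  apply: mulr_ge0 => //.
  rewrite /fu /cond_union_bound big_nat_cond; apply: sumr_ge0 => dd /andP[/andP[h1 h2] _].
  by apply: mulr_ge0 => //; apply: p2ge0 => //; rewrite h1 -ltnS h2.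
have fa x : (x%:E < rstar)%E -> fu x <= 1.
  move=> /ereal_sup_gt [_ [t ht <-]]; rewrite lte_fin => xt.
  exact: le_trans (fu_homo _ _ (ltW xt)) ht.
have fb x : (rstar <= x%:E)%E -> 1 <= fu x.
  move=> rx; rewrite leNgt; apply/negP => fx.
  have := @cvgr_lt _ _ _ _ fu (fu x) (fu_cont x) _ fx.
  move=> H; have [e /= e0 He] := (nbhs_ballP _ _).1 (H _).
  have hb : ball x e (x + e / 2) by rewrite /ball /= opprD addrA subrr add0r normrN gtr0_norm; lra.
  have : ((x + e / 2)%:E <= rstar)%E.
    by apply: ereal_sup_ubound; exists (x + e / 2) => //; exact: ltW (He _ hb).
  move=> h; have := le_trans h rx; rewrite lee_fin; lra.
case: (leP rstar rs) => h.
- have [E1 E2] := @SB_decomp _ _ _ _ _ Fg0 g0 h.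
  rewrite E1 E2; apply: leeD => //; apply: leeD => //.
  apply: inner_le => [r|r [hr _]]; first by rewrite lee_fin.
  by rewrite lee_fin -[X in (X <= _)%R]mul1r ler_wpM2r // fb.
- have [E1 E2] := @SB_decomp _ _ _ _ _ Fg0 g0 (ltW h).
  rewrite E1 E2; apply: leeD => //; apply: leeD => //.
  apply: inner_le => [r|r [_ hr]]; first by rewrite lee_fin.
  by rewrite lee_fin -[X in (_ <= X)%R]mul1r ler_wpM2r // fa.
Qed.
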